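(* Let $n\ge 3$ and $m\ge 1$ be integers, and let $Q_{n,1},\dots,Q_{n,m}$ be the partition of $\{0,1,\dots,m+1\}^n$ defined below. Then each $Q_{n,i}$ is a connected $n$-dimensional tile.
   Context: Define $f:\{0,\dots,m+1\}^3\to\{1,\dots,m\}$ by: $f(x,y,z)=y$ if $0\le x\le m$, $1\le y\le m$, $z=0$; $f=x$ if $1\le x\le m$, $0\le y\le m$, $z=m+1$; $f=y$ if $x=0$, $1\le y\le m$, $1\le z\le m$; $f=x$ if $1\le x\le m$, $y=0$, $1\le z\le m$; $f=z$ if $1\le x\le m+1$, $1\le y\le m+1$, $1\le z\le m$; and $f=1$ at all remaining points. Let $f_3=f$ and for $n\ge4$: $f_n(x_1,\dots,x_n)=f_{n-1}(x_1,x_2,x_3,\dots,x_{n-1})$ if $0\le x_n\le m$, and $f_n(x_1,\dots,x_n)=f_{n-1}(m+1-x_2,x_1,x_3,\dots,x_{n-1})$ if $x_n=m+1$. Let $Q_{n,i}=\{x\in\{0,\dots,m+1\}^n: f_n(x)=i\}$. An $n$-dimensional tile is a non-empty finite subset of $\mathbb{Z}^n$; two disjoint sets are adjacent if some $p$ in the first and $q$ in the second satisfy $p+v=q$ for a unit vector $v$ parallel to an axis; a tile is connected if it cannot be partitioned into two non-adjacent sets. *)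

(* Defs.v *)
From mathcomp Require Import all_boot.
Set Implicit Arguments. Unset Strict Implicit. Unset Printing Implicit Defensive.

Definition f3 (m x y z : nat) : nat :=
  if [&& x <= m, 1 <= y <= m & z == 0] then y
  else if [&& 1 <= x <= m, y <= m & z == m.+1] then x
  else if [&& x == 0, 1 <= y <= m & 1 <= z <= m] then y
  else if [&& 1 <= x <= m, y == 0 & 1 <= z <= m] then x
  else if [&& 1 <= x <= m.+1, 1 <= y <= m.+1 & 1 <= z <= m] then z
  else 1.

(* f_n on a point given by its coordinates x_1,...,x_n stored as
   x 0, ..., x (n-1).  Only meaningful for n >= 3. *)
Fixpoint fn (m n : nat) (x : nat -> nat) : nat :=
  match n with
  | 0 | 1 | 2 => 1
  | 3 => f3 m (x 0) (x 1) (x 2)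
  | k.+1 =>
      if x k <= m then fn m k x
      else fn m k (fun j => if j == 0 then m.+1 - x 1
                            else if j == 1 then x 0 else x j)
  end.

Definition point (n m : nat) := {ffun 'I_n -> 'I_(m.+2)}.

Definition coords n m (p : point n m) : nat -> nat :=
  fun k => if insub k is Some i then nat_of_ord (p i) else 0.

Definition Q (n m i : nat) : {set point n m} :=
  [set p : point n m | fn m n (coords p) == i].

Definition adjacent_pts n m (p q : point n m) : Prop :=
  exists j : 'I_n, (((p j : nat).+1 == q j) || ((q j : nat).+1 == p j))
                   /\ forall k, k != j -> p k = q k.

Definition adjacent_sets n m (A B : {set point n m}) : Prop :=
  exists p q, [/\ p \in A, q \in B & adjacent_pts p q].

(* a tile is a non-empty finite subset; finiteness is automatic here *)
Definition is_tile n m (A : {set point n m}) : Prop := A != set0.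

Definition tile_connected n m (A : {set point n m}) : Prop :=
  forall B C : {set point n m},
    B :|: C = A -> [disjoint B & C] -> B != set0 -> C != set0 ->
    adjacent_sets B C.

(* Main.v *)
Require Import Defs.
From mathcomp Require Import all_boot.
From mathcomp Require Import zify.
From Stdlib Require Import Relations Classical.
Set Implicit Arguments. Unset Strict Implicit.

Definition Sx m n i (x : nat -> nat) := (forall k, k < n -> x k <= m.+1) /\ fn m n x = i.
Definition agree n (x y : nat -> nat) := forall k, k < n -> x k = y k.
Definition stepx n (x y : nat -> nat) := exists j, [/\ j < n, ((x j).+1 = y j \/ (y j).+1 = x j) & forall k, k < n -> k != j -> x k = y k].
Definition Ex m n i (x y : nat -> nat) := [/\ Sx m n i x, Sx m n i y & (stepx n x y \/ agree n x y)].
Definition conn m n i := clos_refl_trans (nat -> nat) (Ex m n i).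
Definition rotf m (x : nat -> nat) := fun j => if j == 0 then m.+1 - x 1 else if j == 1 then x 0 else x j.
Definition upd (x : nat -> nat) j t := fun k => if k == j then t else x k.
Definition p3 a b c := fun k => if k == 0 then a else if k == 1 then b else if k == 2 then c else 0.
Definition gf m n (y : nat -> nat) := fun k => if k == 0 then y 1 else if k == 1 then m.+1 - y 0 else if k == n then m.+1 else y k.

Ltac f3t := rewrite /f3; repeat (match goal with |- context [if ?c then _ else _] => let h := fresh "h" in destruct c eqn:h end); lia.
Ltac ag := rewrite /upd /p3 /rotf /gf; repeat (case: eqP => ?; subst); try lia.

Lemma fnS m k x : 3 <= k -> fn m k.+1 x = if x k <= m then fn m k x else fn m k (rotf m x).
Proof. by case: k => [|[|[|[|k]]]]. Qed.

Lemma fn_ext m n x y : agree n x y -> fn m n x = fn m n y.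
Proof.
elim: n x y => [|n IH] x y H; first by [].
have [hn|hn] := ltnP n 3.
  case: n hn IH H => [|[|[|n]]] // _ _ H.
  change (f3 m (x 0) (x 1) (x 2) = f3 m (y 0) (y 1) (y 2)).
  by rewrite (H 0) // (H 1) // (H 2).
rewrite !fnS // (H n) //.
case: ifP => _.
  apply: IH => k hk; apply: H; lia.
apply: IH => k hk; rewrite /rotf.
case: eqP => _; first by rewrite H //; lia.
case: eqP => _; first by rewrite H //; lia.
apply: H; lia.
Qed.

Lemma fn_low m n x : 3 <= n -> (forall k, 3 <= k < n -> x k <= m) ->
  fn m n x = f3 m (x 0) (x 1) (x 2).
Proof.
elim: n => [|n IH] // hn H.
have [hn3|hn3] := ltnP n 3.
  by case: n hn3 IH hn H => [|[|[|n]]].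
rewrite fnS // ifT; last by apply: H; lia.
apply: IH => // k hk; apply: H; lia.
Qed.

Lemma S_low m n i x : 3 <= n -> (forall k, k < n -> x k <= m.+1) ->
  (forall k, 3 <= k < n -> x k <= m) -> f3 m (x 0) (x 1) (x 2) = i -> Sx m n i x.
Proof. by move=> h3 hb hl hf; split => //; rewrite fn_low. Qed.

Lemma S_agree m n i x y : Sx m n i x -> agree n x y -> Sx m n i y.
Proof.
move=> [hb hf] ha; split; last by rewrite -(@fn_ext m n x y ha).
by move=> k hk; rewrite -ha //; apply: hb.
Qed.

Lemma Ex_sym m n i x y : Ex m n i x y -> Ex m n i y x.
Proof.
case=> hx hy [[j [hj hs he]]|ha]; split => //.
  left; exists j; split => //; first by case: hs; auto.
  by move=> k hk hkj; rewrite he.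
by right => k hk; rewrite ha.
Qed.

Lemma conn_sym m n i x y : conn m n i x y -> conn m n i y x.
Proof.
elim=> [a b h|a|a b c _ h1 _ h2].
- by apply: rt_step; apply: Ex_sym.
- exact: rt_refl.
- exact: rt_trans h2 h1.
Qed.

Lemma conn_agree m n i x y : Sx m n i x -> agree n x y -> conn m n i x y.
Proof.
move=> hx ha; apply: rt_step; split => //; last by right.
exact: S_agree ha.
Qed.

Lemma line_up m n i x j a d : j < n ->
  (forall t, a <= t <= a + d -> Sx m n i (upd x j t)) ->
  conn m n i (upd x j a) (upd x j (a + d)).
Proof.
move=> hj; elim: d => [|d IH] H; first by rewrite addn0; apply: rt_refl.
apply: rt_trans (IH _) _; first by move=> t ht; apply: H; lia.
apply: rt_step; split; [apply: H; lia|apply: H; lia|left].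
exists j; split => //; first by left; rewrite /upd eqxx; lia.
by move=> k hk hkj; rewrite /upd (negbTE hkj).
Qed.

Lemma line m n i x j a c y z : j < n ->
  (forall t, minn a c <= t <= maxn a c -> Sx m n i (upd x j t)) ->
  agree n y (upd x j a) -> agree n z (upd x j c) -> conn m n i y z.
Proof.
move=> hj H hy hz.
have key : forall a c, a <= c -> (forall t, a <= t <= c -> Sx m n i (upd x j t)) ->
   conn m n i (upd x j a) (upd x j c).
  move=> a' c' hac H'; have := @line_up m n i x j a' (c' - a') hj.
  rewrite subnKC //; apply => t ht; apply: H'; lia.
have Sa : Sx m n i (upd x j a) by apply: H; lia.
have Sc : Sx m n i (upd x j c) by apply: H; lia.
apply: rt_trans.
  apply: conn_sym; apply: conn_agree Sa _ => k hk; by rewrite hy.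
apply: rt_trans; last first.
  apply: conn_agree Sc _ => k hk; by rewrite hz.
have [hac|hac] := leqP a c.
  apply: key => // t ht; apply: H; lia.
apply: conn_sym; apply: key; first lia.
move=> t ht; apply: H; lia.
Qed.

Lemma S3 m i a b c : a <= m.+1 -> b <= m.+1 -> c <= m.+1 -> f3 m a b c = i ->
  Sx m 3 i (p3 a b c).
Proof. move=> ha hb hc hf; split => //; move=> k hk; ag. Qed.

Lemma line30 m i a a' b c : a <= m.+1 -> a' <= m.+1 -> b <= m.+1 -> c <= m.+1 ->
  (forall t, minn a a' <= t <= maxn a a' -> f3 m t b c = i) ->
  conn m 3 i (p3 a b c) (p3 a' b c).
Proof.
move=> ha ha' hb hc H.
apply: (@line m 3 i (p3 a b c) 0 a a') => //.
- move=> t ht; apply: (@S_agree _ _ _ (p3 t b c)); first by apply: S3 => //; [lia|apply: H].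
  move=> k hk; ag.
- move=> k hk; ag.
- move=> k hk; ag.
Qed.

Lemma line31 m i a b b' c : a <= m.+1 -> b <= m.+1 -> b' <= m.+1 -> c <= m.+1 ->
  (forall t, minn b b' <= t <= maxn b b' -> f3 m a t c = i) ->
  conn m 3 i (p3 a b c) (p3 a b' c).
Proof.
move=> ha hb hb' hc H.
apply: (@line m 3 i (p3 a b c) 1 b b') => //.
- move=> t ht; apply: (@S_agree _ _ _ (p3 a t c)); first by apply: S3 => //; [lia|apply: H].
  move=> k hk; ag.
- move=> k hk; ag.
- move=> k hk; ag.
Qed.

Lemma line32 m i a b c c' : a <= m.+1 -> b <= m.+1 -> c <= m.+1 -> c' <= m.+1 ->
  (forall t, minn c c' <= t <= maxn c c' -> f3 m a b t = i) ->
  conn m 3 i (p3 a b c) (p3 a b c').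
Proof.
move=> ha hb hc hc' H.
apply: (@line m 3 i (p3 a b c) 2 c c') => //.
- move=> t ht; apply: (@S_agree _ _ _ (p3 a b t)); first by apply: S3 => //; [lia|apply: H].
  move=> k hk; ag.
- move=> k hk; ag.
- move=> k hk; ag.
Qed.

Lemma base m i a b c : 1 <= m -> 1 <= i <= m -> a <= m.+1 -> b <= m.+1 -> c <= m.+1 ->
  f3 m a b c = i -> conn m 3 i (p3 a b c) (p3 1 1 i).
Proof.
move=> m1 hi ha hb hc.
have layer : forall a b, 1 <= a <= m.+1 -> 1 <= b <= m.+1 -> conn m 3 i (p3 a b i) (p3 1 1 i).
  move=> a' b' ha' hb'.
  apply: (@rt_trans _ _ _ (p3 1 b' i)).
    apply: line30; try lia; move=> t ht; f3t.
  apply: line31; try lia; move=> t ht; f3t.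
rewrite {1}/f3; case: ifP => h1.
  have -> : c = 0 by lia. move=> hE; subst i.
  apply: (@rt_trans _ _ _ (p3 0 b 0)); first by apply: line30; try lia; move=> t ht; f3t.
  apply: (@rt_trans _ _ _ (p3 0 b b)); first by apply: line32; try lia; move=> t ht; f3t.
  apply: (@rt_trans _ _ _ (p3 1 b b)); first by apply: line30; try lia; move=> t ht; f3t.
  apply: layer; lia.
case: ifP => h2.
  have -> : c = m.+1 by lia. move=> hE; subst i.
  apply: (@rt_trans _ _ _ (p3 a 0 m.+1)); first by apply: line31; try lia; move=> t ht; f3t.
  apply: (@rt_trans _ _ _ (p3 a 0 a)); first by apply: line32; try lia; move=> t ht; f3t.
  apply: (@rt_trans _ _ _ (p3 a 1 a)); first by apply: line31; try lia; move=> t ht; f3t.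
  apply: layer; lia.
case: ifP => h3.
  have -> : a = 0 by lia. move=> hE; subst i.
  apply: (@rt_trans _ _ _ (p3 0 b b)); first by apply: line32; try lia; move=> t ht; f3t.
  apply: (@rt_trans _ _ _ (p3 1 b b)); first by apply: line30; try lia; move=> t ht; f3t.
  apply: layer; lia.
case: ifP => h4.
  have -> : b = 0 by lia. move=> hE; subst i.
  apply: (@rt_trans _ _ _ (p3 a 0 a)); first by apply: line32; try lia; move=> t ht; f3t.
  apply: (@rt_trans _ _ _ (p3 a 1 a)); first by apply: line31; try lia; move=> t ht; f3t.
  apply: layer; lia.
case: ifP => h5.
  move=> hc5; subst c; apply: layer; lia.
move=> hi1; subst i.
have K00 : conn m 3 1 (p3 0 0 1) (p3 1 1 1).
  apply: (@rt_trans _ _ _ (p3 0 1 1)); first by apply: line31; try lia; move=> t ht; f3t.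
  apply: line30; try lia; move=> t ht; f3t.
have K0 : conn m 3 1 (p3 m.+1 0 1) (p3 1 1 1).
  apply: (@rt_trans _ _ _ (p3 m.+1 1 1)); first by apply: line31; try lia; move=> t ht; f3t.
  apply: layer; lia.
have K4 : forall b, b <= m.+1 -> conn m 3 1 (p3 0 b m.+1) (p3 1 1 1).
  move=> b' hb'.
  apply: (@rt_trans _ _ _ (p3 0 0 m.+1)); first by apply: line31; try lia; move=> t ht; f3t.
  apply: (@rt_trans _ _ _ (p3 0 0 1)); first by apply: line32; try lia; move=> t ht; f3t.
  exact: K00.
have [c0|[cM|cm]] : c = 0 \/ c = m.+1 \/ 1 <= c <= m by lia.
- subst c.
  have [b0|[bM|bm]] : b = 0 \/ b = m.+1 \/ (1 <= b <= m /\ a = m.+1) by lia.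
  + subst b.
    apply: (@rt_trans _ _ _ (p3 0 0 0)); first by apply: line30; try lia; move=> t ht; f3t.
    apply: (@rt_trans _ _ _ (p3 0 0 1)); first by apply: line32; try lia; move=> t ht; f3t.
    exact: K00.
  + subst b.
    apply: (@rt_trans _ _ _ (p3 m.+1 m.+1 0)); first by apply: line30; try lia; move=> t ht; f3t.
    apply: (@rt_trans _ _ _ (p3 m.+1 m.+1 1)); first by apply: line32; try lia; move=> t ht; f3t.
    apply: layer; lia.
  + case: bm => bm aM; subst a.
    apply: (@rt_trans _ _ _ (p3 m.+1 b 1)); first by apply: line32; try lia; move=> t ht; f3t.
    apply: layer; lia.
- subst c.
  have [a0|[aM|bM]] : a = 0 \/ a = m.+1 \/ b = m.+1 by lia.
  + subst a; exact: K4.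
  + subst a.
    apply: (@rt_trans _ _ _ (p3 m.+1 0 m.+1)); first by apply: line31; try lia; move=> t ht; f3t.
    apply: (@rt_trans _ _ _ (p3 m.+1 0 1)); first by apply: line32; try lia; move=> t ht; f3t.
    exact: K0.
  + subst b.
    apply: (@rt_trans _ _ _ (p3 0 m.+1 m.+1)); first by apply: line30; try lia; move=> t ht; f3t.
    exact: K4.
- have [[a0 b0]|[[a0 bM]|[aM b0]]] : (a = 0 /\ b = 0) \/ (a = 0 /\ b = m.+1) \/ (a = m.+1 /\ b = 0) by lia.
  + subst a b.
    apply: (@rt_trans _ _ _ (p3 0 0 1)); first by apply: line32; try lia; move=> t ht; f3t.
    exact: K00.
  + subst a b.
    apply: (@rt_trans _ _ _ (p3 0 m.+1 1)); first by apply: line32; try lia; move=> t ht; f3t.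
    apply: (@rt_trans _ _ _ (p3 1 m.+1 1)); first by apply: line30; try lia; move=> t ht; f3t.
    apply: layer; lia.
  + subst a b.
    apply: (@rt_trans _ _ _ (p3 m.+1 0 1)); first by apply: line32; try lia; move=> t ht; f3t.
    exact: K0.
Qed.

Lemma S_lift m n i y c : 3 <= n -> c <= m -> Sx m n i y -> Sx m n.+1 i (upd y n c).
Proof.
move=> hn hc [hb hf]; split.
  move=> k hk; rewrite /upd; case: eqP => ?; [lia|apply: hb; lia].
rewrite fnS // {1}/upd eqxx ifT // -hf; apply: fn_ext => k hk.
rewrite /upd; case: eqP => //; lia.
Qed.

Lemma Ex_lift m n i y z c : 3 <= n -> c <= m -> Ex m n i y z ->
  Ex m n.+1 i (upd y n c) (upd z n c).
Proof.
move=> hn hc [hy hz hs]; split; try exact: S_lift.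
case: hs => [[j [hj hs he]]|ha]; [left|right].
  exists j; split; first lia.
    by rewrite /upd; case: eqP => ?; [lia|].
  move=> k hk hkj; rewrite /upd; case: eqP => // ?; apply: he => //; lia.
move=> k hk; rewrite /upd; case: eqP => // ?; apply: ha; lia.
Qed.

Lemma conn_lift m n i y z c : 3 <= n -> c <= m -> conn m n i y z ->
  conn m n.+1 i (upd y n c) (upd z n c).
Proof.
move=> hn hc; elim=> [a b h|a|a b d _ h1 _ h2].
- by apply: rt_step; apply: Ex_lift.
- exact: rt_refl.
- exact: rt_trans h1 h2.
Qed.

Lemma S_g m n i y : 3 <= n -> Sx m n i y -> Sx m n.+1 i (gf m n y).
Proof.
move=> hn [hb hf]; split.
  move=> k hk; have := hb 1; have := hb 0; have := hb k; ag.
rewrite fnS // ifF; last by rewrite /gf; ag.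
rewrite -hf; apply: fn_ext => k hk.
have := hb 0; rewrite /rotf /gf; ag.
Qed.

Lemma Ex_g m n i y z : 3 <= n -> Ex m n i y z -> Ex m n.+1 i (gf m n y) (gf m n z).
Proof.
move=> hn [hy hz hs]; split; try exact: S_g.
have [hby _] := hy; have [hbz _] := hz.
have y0 := hby 0; have z0 := hbz 0.
case: hs => [[j [hj hs he]]|ha]; [left|right].
  have [j0|[j1|jo]] : j = 0 \/ j = 1 \/ (1 < j < n) by lia.
  - subst j; exists 1; split; first lia.
      rewrite /gf /=; lia.
    move=> k hk hkj; ag; rewrite he; lia.
  - subst j; exists 0; split; first lia.
      rewrite /gf /=; lia.
    move=> k hk hkj; ag; rewrite he; lia.
  - exists j; split; first lia.
      rewrite /gf; ag.
    move=> k hk hkj; ag; rewrite he; lia.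
move=> k hk; ag; rewrite ha; lia.
Qed.

Lemma conn_g m n i y z : 3 <= n -> conn m n i y z ->
  conn m n.+1 i (gf m n y) (gf m n z).
Proof.
move=> hn; elim=> [a b h|a|a b d _ h1 _ h2].
- by apply: rt_step; apply: Ex_g.
- exact: rt_refl.
- exact: rt_trans h1 h2.
Qed.

Lemma Sb m n i : 1 <= m -> 1 <= i <= m -> 3 <= n -> Sx m n i (p3 1 1 i).
Proof.
move=> m1 hi hn; apply: S_low => //.
- move=> k hk; ag.
- move=> k hk; ag.
- rewrite /p3 /=; f3t.
Qed.

Lemma main_conn m i n : 1 <= m -> 1 <= i <= m -> 3 <= n ->
  forall x, Sx m n i x -> conn m n i x (p3 1 1 i).
Proof.
move=> m1 hi; elim: n => [|n IH] // hn x hx.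
have [hn3|hn3] := ltnP n 3.
  have e : n = 2 by lia. subst n.
  have [hb hf] := hx.
  apply: (@rt_trans _ _ _ (p3 (x 0) (x 1) (x 2))).
    apply: conn_agree hx _ => k hk; ag.
  by apply: base => //; apply: hb.
have [hb hf] := hx.
have Sbn := @Sb m n i m1 hi hn3.
have [xn|xn] := leqP (x n) m.
  have Sn : Sx m n i x.
    split; first by move=> k hk; apply: hb; lia.
    by rewrite -hf fnS // xn.
  apply: (@rt_trans _ _ _ (upd x n (x n))).
    apply: conn_agree hx _ => k hk; ag.
  apply: (@rt_trans _ _ _ (upd (p3 1 1 i) n (x n))).
    exact: (conn_lift hn3 xn (IH hn3 x Sn)).
  apply: (@line m n.+1 i (p3 1 1 i) n (x n) 0) => //; first by move=> t ht; apply: S_lift => //; lia.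
  move=> k hk; ag.
have Sn : Sx m n i (rotf m x).
  split; last by rewrite -hf fnS // ifF //; lia.
  move=> k hk; have := hb 0; have := hb 1; have := hb k; ag.
apply: (@rt_trans _ _ _ (gf m n (rotf m x))).
  have := hb 1; have := hb n; have := hb 0.
  move=> h0 h1 h2; apply: conn_agree hx _ => k hk; ag.
apply: (@rt_trans _ _ _ (gf m n (p3 1 1 i))).
  exact: (conn_g hn3 (IH hn3 _ Sn)).
have Sgb := S_g hn3 Sbn.
have Sw : Sx m n i (p3 1 m i).
  apply: S_low => //; [move=> k hk; ag|move=> k hk; ag|rewrite /p3 /=; f3t].
apply: (@rt_trans _ _ _ (p3 1 m i)).
  apply: (@line m n.+1 i (p3 1 m i) n m.+1 0) => //.
    move=> t ht; have [tm|tm] := leqP t m; first exact: S_lift.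
    apply: S_agree Sgb _ => k hk; ag.
  move=> k hk; ag.
  move=> k hk; ag.
apply: (@line m n.+1 i (p3 1 1 i) 1 m 1) => //; first lia.
  move=> t ht; apply: S_low => //; [move=> k hk; ag|move=> k hk; ag|rewrite /upd /p3 /=; f3t].
move=> k hk; ag.
move=> k hk; ag.
Qed.

Definition toP n m (x : nat -> nat) : point n m := [ffun j : 'I_n => inord (x j)].

Lemma coords_toP n m x : (forall k, k < n -> x k <= m.+1) -> agree n (coords (@toP n m x)) x.
Proof.
move=> hb k hk; rewrite /coords (insubT (fun k => k < n) hk) /= ffunE inordK //.
by rewrite ltnS; apply: hb.
Qed.

Lemma toP_coords n m (p : point n m) : toP n m (coords p) = p.
Proof.
apply/ffunP => j; rewrite ffunE /coords valK /=.
by apply: val_inj; rewrite /= inordK.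
Qed.

Lemma coords_bound n m (p : point n m) k : k < n -> coords p k <= m.+1.
Proof.
move=> hk; rewrite /coords (insubT (fun k => k < n) hk) /=.
by rewrite -ltnS.
Qed.

Lemma inQ n m i (p : point n m) : (p \in Q n m i) = (fn m n (coords p) == i).
Proof. by rewrite inE. Qed.

Lemma S_inQ n m i x : Sx m n i x -> @toP n m x \in Q n m i.
Proof.
case=> hb hf; rewrite inQ -hf; apply/eqP; apply: fn_ext; exact: coords_toP.
Qed.

Lemma inQ_S n m i (p : point n m) : p \in Q n m i -> Sx m n i (coords p).
Proof.
rewrite inQ => /eqP hf; split => //; move=> k hk; exact: coords_bound.
Qed.

Lemma adj_sym n m (p q : point n m) : adjacent_pts p q -> adjacent_pts q p.
Proof.
case=> j [h1 h2]; exists j; split; first by rewrite orbC.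
by move=> k hk; rewrite h2.
Qed.

Lemma propag n m i (X Y : {set point n m}) :
  Q n m i \subset X :|: Y -> [disjoint X & Y] ->
  (forall p q, p \in X -> q \in Y -> adjacent_pts p q -> False) ->
  forall x y, conn m n i x y -> toP n m x \in X -> toP n m y \in X.
Proof.
move=> hU hD hN x y; elim=> [a b [ha hb hs]|a|a b c _ h1 _ h2].
- move=> haX.
  have := subsetP hU _ (S_inQ hb); rewrite in_setU => /orP [//|hbY].
  exfalso; case: hs => [[j [hj hs he]]|hag].
    apply: (hN _ _ haX hbY); exists (Ordinal hj); split.
      have := @coords_toP n m a (proj1 ha) j hj; have := @coords_toP n m b (proj1 hb) j hj.
      rewrite /coords (insubT (fun k => k < n) hj) /= => -> ->; case: hs => ->; rewrite eqxx ?orbT //.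
    move=> k hk; apply/val_inj; rewrite /= !ffunE he //.
  have : toP n m a = toP n m b by apply/ffunP => j; rewrite !ffunE hag.
  by move=> e; rewrite -e (disjointFr hD haX) in hbY.
- by [].
- by move=> /h1 /h2.
Qed.

Theorem lemma5p2 (n m : nat) : 3 <= n -> 1 <= m ->
  forall i : nat, 1 <= i <= m -> is_tile (Q n m i) /\ tile_connected (Q n m i).
Proof.
move=> hn hm i hi.
have Sb := @Sb m n i hm hi hn.
have bQ := S_inQ Sb.
split; first by apply/set0Pn; exists (toP n m (p3 1 1 i)).
move=> B C hU hD hB hC; apply: NNPP => hna.
have hsub : Q n m i \subset B :|: C by rewrite hU.
have hsub' : Q n m i \subset C :|: B by rewrite setUC hU.
have bQ' := bQ; rewrite -hU in_setU in bQ'.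
have hN : forall p q, p \in B -> q \in C -> adjacent_pts p q -> False.
  by move=> p q' hp hq' ha; apply: hna; exists p, q'.
have hN' : forall p q, p \in C -> q \in B -> adjacent_pts p q -> False.
  by move=> p q' hp hq' ha; apply: hna; exists q', p; split => //; apply: adj_sym.
have hD' : [disjoint C & B] by rewrite disjoint_sym.
case/orP: bQ' => hbX.
- case/set0Pn: hC => q hq.
  have qQ : q \in Q n m i by rewrite -hU in_setU hq orbT.
  have := propag hsub hD hN (conn_sym (main_conn hm hi hn (inQ_S qQ))) hbX.
  by rewrite toP_coords (disjointFl hD hq).
- case/set0Pn: hB => q hq.
  have qQ : q \in Q n m i by rewrite -hU in_setU hq.
  have := propag hsub' hD' hN' (conn_sym (main_conn hm hi hn (inQ_S qQ))) hbX.
  by rewrite toP_coords (disjointFr hD hq).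
Qed.
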